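(* Let $\mathcal N$ be a finite network and let $\mathcal I=\mathcal N.\omega$ be the outcome of a run of the reduction process $\omega$. Let $y$ be a node of $\mathcal I$ that is not isolated in $\mathcal I$. Then either (1) there is a chordless cycle $C$ in $\mathcal I$ of length $k\ge 4$ with $y\in C$, or (2) there are chordless cycles $C_1,C_2$ in $\mathcal I$, each of length at least $4$, and nodes $x\in C_1$, $z\in C_2$ such that $y$ lies on a path in $\mathcal I$ from $x$ to $z$.
   Context: A network $\mathcal N=(N,E)$ is a finite simple undirected graph. For a graph $G$ and a set $Y$ of its nodes, the neighborhood is $Y.\eta=\{z\notin Y:\exists y\in Y,\ (y,z)\text{ an edge of }G\}$, the region is $Y.\rho=Y\cup Y.\eta$, and the neighborhood closure is $Y.\varphi=\{z\in Y.\rho:\{z\}.\rho\subseteq Y.\rho\}$ (all computed in $G$). A node $z$ is subsumed by a node $y\neq z$ in $G$ if $\{z\}.\varphi\subseteq\{y\}.\varphi$; equivalently, $z\in\{y\}.\eta$ and $\{z\}.\eta\subseteq\{y\}.\rho$. The reduction process $\omega$: set $G_0=\mathcal N$; as long as the current graph $G_i$ (an induced subgraph of $\mathcal N$) contains distinct nodes $y,z$ with $z$ subsumed by $y$ in $G_i$, choose such a pair and let $G_{i+1}$ be obtained from $G_i$ by deleting $z$ and its incident edges; when no such pair exists, stop. The final graph is denoted $\mathcal N.\omega$. A cycle $\langle y_1,\dots,y_k,y_1\rangle$ is a closed simple path of length $k$; a chord is an edge $(y_i,y_j)$ between two nodes of the cycle that are not consecutive on it; a cycle is chordless if it has no chord.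 *)

(* Defs.v *)
(* A network is a finite simple graph: a symmetric,
   irreflexive relation e on a finType T.  Induced subgraphs are given by
   their node sets A : {set T}. *)
From mathcomp Require Import all_boot.
Set Implicit Arguments. Unset Strict Implicit. Unset Printing Implicit Defensive.

Section Net.
Variables (T : finType) (e : rel T).

Definition nbh (A Y : {set T}) : {set T} :=
  [set z in A | (z \notin Y) && [exists y in Y, e y z]].
Definition region (A Y : {set T}) : {set T} := Y :|: nbh A Y.
Definition nclosure (A Y : {set T}) : {set T} :=
  [set z in region A Y | region A [set z] \subset region A Y].

Definition subsumed (A : {set T}) (z y : T) : bool :=
  [&& z \in A, y \in A, z != y &
      nclosure A [set z] \subset nclosure A [set y]].

Definition omega_step (A B : {set T}) : Prop :=
  exists y z, subsumed A z y /\ B = A :\ z.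

Inductive omega_reach : {set T} -> {set T} -> Prop :=
| omega_refl A : omega_reach A A
| omega_next A B C : omega_step A B -> omega_reach B C -> omega_reach A C.

Definition omega_final (A : {set T}) : Prop :=
  forall y z, ~~ subsumed A z y.

Definition omega_outcome (I : {set T}) : Prop :=
  omega_reach [set: T] I /\ omega_final I.

(* c = [y_1; ...; y_k] is a chordless cycle <y_1,...,y_k,y_1> of length k
   in the induced subgraph on A *)
Definition chordless_cycle (A : {set T}) (c : seq T) : Prop :=
  [/\ 3 <= size c, uniq c, all (mem A) c, cycle e c &
      forall (x0 : T) i j, i < size c -> j < size c ->
        e (nth x0 c i) (nth x0 c j) ->
        (j == i.+1 %% size c) || (i == j.+1 %% size c)].

Definition simple_path (A : {set T}) (x : T) (q : seq T) : Prop :=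
  [/\ uniq (x :: q), all (mem A) (x :: q) & path e x q].
End Net.

(* Main.v *)
Require Import Defs.
From mathcomp Require Import all_boot zify.
Set Implicit Arguments. Unset Strict Implicit. Unset Printing Implicit Defensive.

Section P.
Variables (T : finType) (e : rel T) (e_sym : symmetric e) (e_irr : irreflexive e).
Variable A : {set T}.

Lemma in_region1 z w : z \in A ->
  (w \in region e A [set z]) = (w == z) || [&& w \in A, w != z & e z w].
Proof.
move=> zA; rewrite /region /nbh !inE; case: eqP => //= _.
congr (_ && _); apply/existsP/idP => [[y0 /andP[]]|ezw]; rewrite ?inE.
  by move/eqP->.
by exists z; rewrite inE eqxx.
Qed.

Lemma final_witness y z : (forall y z, ~~ subsumed e A z y) ->
  y \in A -> z \in A -> e y z ->
  exists2 u, u \in A & [&& e z u, u != y & ~~ e y u].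
Proof.
move=> Hfin yA zA eyz.
case: (boolP [exists u, [&& u \in A, e z u, u != y & ~~ e y u]]).
  by case/existsP=> u /and4P[uA ezu uy neyu]; exists u => //; rewrite ezu uy neyu.
move=> /existsPn H; exfalso; move: (Hfin y z); rewrite /subsumed zA yA /=.
have zy : z != y by apply/eqP=> zy; move: eyz; rewrite zy e_irr.
rewrite zy /=; move/negP; apply.
have sub : region e A [set z] \subset region e A [set y].
  apply/subsetP=> w; rewrite !in_region1 //.
  case/orP=> [/eqP->|/and3P[wA wz ezw]].
    by rewrite zA eyz zy orbT.
  have := H w; rewrite wA ezw /= negb_and !negbK; case/orP=> [/eqP->|->].
    by rewrite eqxx.
  by case: (w == y).
have memN : forall Y v, (v \in nclosure e A Y) =
   (v \in region e A Y) && (region e A [set v] \subset region e A Y).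
  by move=> Y v; rewrite /nclosure in_set.
apply/subsetP=> w; rewrite !memN => /andP[wr ws].
by rewrite (subsetP sub _ wr) /= (subset_trans ws sub).
Qed.


Ltac li := try change (@size (Equality.sort (fintype_Finite__to__eqtype_Equality T))) with (@size (Finite.sort T)) in *;
  repeat match goal with
  | H : is_true (leq _ _) |- _ => revert H
  | H : @eq nat _ _ |- _ => revert H
  | H : @eq ?t ?x ?y |- _ => let _ := constr:(x : nat) in
        let H' := fresh in have H' : (x = y :> nat) := H; clear H; revert H'
  | H : is_true (@eq_op ?E ?x _) |- _ => let _ := constr:(x : nat) in revert H
  | H : is_true (~~ @eq_op ?E ?x _) |- _ => let _ := constr:(x : nat) in revert H
  end;
  repeat match goal with H : _ |- _ => clear H end; intros; lia.

Definition Ep (p : seq T) := forall x0 i j, i < size p -> j < size p ->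
  e (nth x0 p i) (nth x0 p j) = (j == i.+1) || (i == j.+1).
Definition ipath p := [/\ uniq p, all (mem A) p & Ep p].

Hypothesis Hfin : forall y z, ~~ subsumed e A z y.

Lemma end_lemma (p : seq T) (x0 : T) : ipath p -> 1 < size p ->
  (exists u, ipath (rcons p u)) \/
  (exists c, [/\ chordless_cycle e A c, 4 <= size c & last x0 p \in c]).
Proof.
case=> up ap Ep_ sp.
set n := (size p).-1.
have sn : size p = n.+1 by rewrite /n; li.
clearbody n.
set a := nth x0 p n; set b := nth x0 p n.-1.
have aA : a \in A by apply: (allP ap); apply: mem_nth; li.
have bA : b \in A by apply: (allP ap); apply: mem_nth; li.
have eba : e b a.
  rewrite /a /b Ep_; [apply/orP; left; apply/eqP; li|li|li].
have [u uA /and3P[eau ub nebu]] := final_witness Hfin bA aA eba.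
have lastp : last x0 p = a by rewrite -nth_last sn.
have unp : u \notin p.
  apply/negP=> up'; have hlt : index u p < size p by rewrite index_mem.
  move: eau; rewrite /a -(nth_index x0 up') Ep_; last 2 first.
  - li.
  - by rewrite index_mem.
  case/orP=> /eqP H; first li.
  move: ub; rewrite -(nth_index x0 up') /b; have -> : index u p = n.-1 by li.
  by rewrite eqxx.
case: (boolP [exists k : 'I_n.-1, e (nth x0 p k) u]); last first.
  move/existsPn=> Hn; left; exists u; split.
  - by rewrite rcons_uniq unp.
  - by rewrite all_rcons ap andbT; exact: uA.
  have Hn' : forall x1 k, k < n.-1 -> e (nth x1 p k) u = false.
    move=> x1 k hk; rewrite (set_nth_default x0); last li.
    by apply/negbTE; exact: (Hn (Ordinal hk)).
  have Hu : forall x1 k, k < size p -> e (nth x1 p k) u = (k == n).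
    move=> x1 k hk; have [->|kn] := eqVneq k n.
      rewrite (set_nth_default x0) ?eqxx; [exact: eau|li].
    have [->|kn1] := eqVneq k n.-1.
      by rewrite (set_nth_default x0) ?(negbTE nebu) //; li.
    by rewrite Hn' //; li.
  move=> x1 i j; rewrite size_rcons !nth_rcons => hi hj.
  have [hi'|hi'] := ltnP i (size p); have [hj'|hj'] := ltnP j (size p).
  - exact: Ep_.
  - have -> : j = size p by li.
    rewrite eqxx Hu //.
    by apply/idP/idP; li.
  - have -> : i = size p by li.
    rewrite eqxx e_sym Hu //.
    by apply/idP/idP; li.
  - have -> : i = size p by li.
    have -> : j = size p by li.
    by rewrite eqxx e_irr; apply/esym/idP/idP; li.
move=> exk.
have exP : exists k, (k < n.-1) && e (nth x0 p k) u.
  by case/existsP: exk => k hk; exists k; rewrite hk ltn_ord.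
have ubP : forall k, (k < n.-1) && e (nth x0 p k) u -> k <= n.
  by move=> k /andP[hk _]; li.
case: (ex_maxnP exP ubP) => i /andP[hi eiu] imax.
right; exists (rcons (drop i p) u).
have sd : size (drop i p) = n.+1 - i by rewrite size_drop sn.
have eas : forall x1 k, k < n.+1 - i -> nth x1 (drop i p) k = nth x1 p (i + k).
  by move=> x1 k hk; rewrite nth_drop.
have eA : forall x1 k, k < size p -> nth x1 p k = nth x0 p k.
  by move=> x1 k hk; rewrite (set_nth_default x0).
split; last first.
- rewrite lastp mem_rcons inE; apply/orP; right.
  rewrite /a (_ : n = i + (n - i)); last li.
  rewrite -nth_drop; apply: mem_nth; li.
- by rewrite size_rcons sd; li.
split.
- by rewrite size_rcons sd; li.
- rewrite rcons_uniq drop_uniq // andbT; apply: contra unp; exact: mem_drop.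
- rewrite all_rcons; apply/andP; split; [exact: uA| apply/allP => v /mem_drop; exact: (allP ap)].
- rewrite (cycle_path x0) last_rcons; apply/(pathP x0) => k.
  rewrite size_rcons sd; case: k => [|k] hk /=.
    rewrite nth_rcons sd (_ : (0 < n.+1 - i) = true); last li.
    rewrite eas ?addn0; last li.
    by rewrite e_sym.
  rewrite !nth_rcons sd (_ : (k < n.+1 - i) = true); last li.
  have [hk2|hk2] := ltnP k.+1 (n.+1 - i).
    by rewrite !eas // Ep_; [apply/orP; left; apply/eqP; li|li|li].
  rewrite (_ : k.+1 == n.+1 - i); last by apply/eqP; li.
  by rewrite eas; [rewrite (_ : i + k = n); [exact: eau|li]|li].
have key : forall c, c < n.+1 - i -> e (nth x0 p (i + c)) u -> (c == 0) || (c == n - i).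
  move=> c hc H.
  have [h1|h1] := ltnP (i + c) n.-1.
    have h2 : i + c <= i by apply: imax; rewrite h1 H.
    apply/orP; left; apply/eqP; li.
  have [h3|h3] := eqVneq (i + c) n.-1.
    by move: nebu; rewrite /b -h3 H.
  apply/orP; right; apply/eqP; li.
move=> x1 a' b'; rewrite size_rcons sd !nth_rcons sd => ha hb.
have [ha'|ha'] := ltnP a' (n.+1 - i); have [hb'|hb'] := ltnP b' (n.+1 - i).
- rewrite !eas // !eA; [|li|li]; rewrite Ep_; [|li|li].
  case/orP=> /eqP H; apply/orP; [left|right]; rewrite modn_small; apply/eqP; li.
- have hb'e : b' = n.+1 - i by li.
  rewrite (_ : b' == n.+1 - i); last by apply/eqP; li.
  rewrite eas // eA; last li.
  move=> /(key _ ha') /orP[] /eqP ha0.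
    by apply/orP; right; rewrite hb'e modnn ha0.
  by apply/orP; left; rewrite modn_small; apply/eqP; li.
- have ha'e : a' = n.+1 - i by li.
  rewrite (_ : a' == n.+1 - i); last by apply/eqP; li.
  rewrite eas // eA; last li.
  rewrite e_sym => /(key _ hb') /orP[] /eqP hb0.
    by apply/orP; left; rewrite ha'e modnn hb0.
  by apply/orP; right; rewrite modn_small; apply/eqP; li.
- rewrite (_ : b' == n.+1 - i); last by apply/eqP; li.
  rewrite (_ : a' == n.+1 - i); last by apply/eqP; li.
  by rewrite e_irr.
Qed.

Lemma rev_ipath p : ipath p -> ipath (rev p).
Proof.
case=> up ap Ep_; split; first by rewrite rev_uniq.
  by rewrite all_rev.
move=> x1 i j; rewrite size_rev => hi hj; rewrite !nth_rev //.
rewrite Ep_; [|li|li].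
by apply/idP/idP; li.
Qed.

Lemma size_ipath p : ipath p -> size p <= #|A|.
Proof.
case=> up ap _; rewrite cardE; apply: uniq_leq_size => // v vp.
by rewrite mem_enum; exact: (allP ap).
Qed.

Definition Goal2 (y : T) :=
  exists (c1 c2 : seq T) (x z : T) (q : seq T),
     [/\ chordless_cycle e A c1 /\ 4 <= size c1,
         chordless_cycle e A c2 /\ 4 <= size c2,
         x \in c1 /\ z \in c2 &
         [/\ simple_path e A x q, last x q = z & y \in x :: q]].

Lemma one_step y (p : seq T) : ipath p -> y \in p -> 1 < size p ->
  (exists q, [/\ ipath q, y \in q & size p < size q]) \/ Goal2 y.
Proof.
move=> hp yp sp.
case: (end_lemma y hp sp) => [[u hu]|[c2 [hc2 s2 l2]]].
  by left; exists (rcons p u); rewrite size_rcons mem_rcons inE yp orbT.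
have hr := rev_ipath hp.
case: (end_lemma y hr) => [|[u hu]|[c1 [hc1 s1 l1]]]; first by rewrite size_rev.
  left; exists (u :: p); split => //.
  by move: (rev_ipath hu); rewrite rev_rcons revK.
  by rewrite inE yp orbT.
right; case: p hp yp sp hr l1 l2 => [//|x q] hp yp sp hr l1 l2.
move: l1; rewrite rev_cons last_rcons => l1.
exists c1, c2, x, (last x q), q; split => //.
case: hp => up ap Ep_; split => //.
split => //. apply/(pathP y) => k hk.
have -> : nth y q k = nth y (x :: q) k.+1 by [].
rewrite Ep_ /=; [|li|li].
by rewrite eqxx.
Qed.

Lemma main_ind y k : forall (p : seq T), #|A| - size p <= k -> ipath p -> y \in p ->
  1 < size p -> Goal2 y.
Proof.
elim: k => [|k IH] p hk hp yp sp; case: (one_step hp yp sp) => // [[q [hq yq sq]]].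
  have := size_ipath hq; li.
apply: (IH q) => //; last li.
have := size_ipath hq; li.
Qed.

End P.

Theorem proposition4 (T : finType) (e : rel T)
  (e_sym : symmetric e) (e_irr : irreflexive e)
  (I : {set T}) (HI : omega_outcome e I)
  (y : T) (yI : y \in I) (ynis : exists2 w, w \in I & e y w) :
  (exists c : seq T, [/\ chordless_cycle e I c, 4 <= size c & y \in c])
  \/
  (exists (c1 c2 : seq T) (x z : T) (q : seq T),
     [/\ chordless_cycle e I c1 /\ 4 <= size c1,
         chordless_cycle e I c2 /\ 4 <= size c2,
         x \in c1 /\ z \in c2 &
         [/\ simple_path e I x q, last x q = z & y \in x :: q]]).
Proof.
right; case: ynis => w wI eyw.
have Hfin := HI.2.
have yw : y != w by apply/eqP=> h; move: eyw; rewrite h e_irr.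
apply: (@main_ind T e e_sym e_irr I Hfin y #|I| [:: y; w]) => //.
- by rewrite leq_subr.
- split.
  + by rewrite /= inE yw.
  + by rewrite /= yI wI.
  move=> x0 i j.
  case: i => [|[|i]]; case: j => [|[|j]] //= _ _.
  all: rewrite ?e_irr //.
  by rewrite e_sym.
- by rewrite inE eqxx.
Qed.
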